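(* Every prime number that is antipalindromic in base $3$ has a base-$3$ expansion with an odd number $n$ of digits, where $n\ge 3$.
   Context: For an integer $b\ge 2$, every natural number $m$ has a unique base-$b$ expansion $m=a_nb^n+\dots+a_1b+a_0$ with $a_0,\dots,a_n\in\{0,1,\dots,b-1\}$ and $a_n\neq 0$. The number $m$ is antipalindromic in base $b$ if $a_j=b-1-a_{n-j}$ for all $j\in\{0,1,\dots,n\}$. *)

(* Defs.v *)
From mathcomp Require Import all_boot.
Set Implicit Arguments. Unset Strict Implicit. Unset Printing Implicit Defensive.

(* Base-b digits of m, least significant first: [a_0; a_1; ...; a_n],
   with last digit a_n <> 0 when m > 0; digits of 0 is the empty list.
   Fuel m suffices since m %/ b < m for b >= 2 and m > 0. *)
Fixpoint digits_aux (b fuel m : nat) : seq nat :=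
  match fuel with
  | 0 => [::]
  | fuel'.+1 => if m == 0 then [::] else (m %% b) :: digits_aux b fuel' (m %/ b)
  end.

Definition digits (b m : nat) : seq nat := digits_aux b m m.

Definition antipalindromic (b m : nat) : Prop :=
  0 < m /\
  let s := digits b m in
  forall j, j < size s -> nth 0 s j = b - 1 - nth 0 s (size s - 1 - j).

(* Main.v *)
Require Import Defs.
From mathcomp Require Import all_boot.
From mathcomp Require Import zify.

Lemma digits_aux_lt3 fuel m : all (fun d => d < 3) (digits_aux 3 fuel m).
Proof.
elim: fuel m => [|f IH] m //=; case: (m == 0) => //=.
by rewrite ltn_mod IH.
Qed.

Lemma digits_aux_par fuel m : m <= fuel ->
  odd m = odd (sumn (digits_aux 3 fuel m)).
Proof.
elim: fuel m => [|f IH] m /=.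
  by rewrite leqn0 => /eqP ->.
case: eqP => [-> //|/eqP m0 Hm].
rewrite oddD -IH; last by lia.
rewrite {1}(divn_eq m 3) oddD oddM /=.
by rewrite Bool.andb_true_r addbC.
Qed.

Lemma sum_comp t : all (fun d => d < 3) t ->
  sumn (map (fun d => 2 - d) t) + sumn t = 2 * size t.
Proof.
elim: t => //= a t IH /andP [Ha Ht].
have := IH Ht. lia.
Qed.

Theorem mainTheorem7 (p : nat) :
  prime p -> antipalindromic 3 p ->
  odd (size (digits 3 p)) /\ 3 <= size (digits 3 p).
Proof.
move=> pr [p0 /= H].
set s := digits 3 p in H *.
have Hs : s = map (fun d => 2 - d) (rev s).
  apply: (eq_from_nth (x0 := 0)); first by rewrite size_map size_rev.
  move=> j Hj.
  rewrite (nth_map 0); last by rewrite size_rev.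
  rewrite nth_rev; last by [].
  rewrite H //; congr (_ - nth 0 s _); lia.
have Hlt : all (fun d => d < 3) s by apply: digits_aux_lt3.
have Hsum : sumn s + sumn s = 2 * size s.
  by rewrite {1}Hs -(sumn_rev s) sum_comp ?all_rev // size_rev.
have Hpar : odd p = odd (size s).
  have E : sumn s = size s.
    by apply/eqP; rewrite -(eqn_pmul2l (isT : 0 < 2)) mul2n -addnn Hsum.
  by rewrite -E /s /digits -digits_aux_par.
have p2 : p != 2.
  apply/eqP => E; move: H; rewrite /s E /digits /= => H.
  by move: (H 0 isT).
have podd : odd p.
  by apply/negPn/negP => /(prime_oddPn pr) E; rewrite E in p2.
have p3 : 3 <= p.
  move: (prime_gt1 pr) p2 podd; case: p {H Hs Hlt Hsum Hpar s p0 pr} => // [[|[|]]] //.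
rewrite -Hpar podd; split=> //.
have : 1 < size s.
  rewrite /s /digits.
  case: p p3 {H Hs Hlt Hsum Hpar s p0 pr p2 podd} => // q Hq /=.
  have : (q.+1 %/ 3 != 0) by rewrite -lt0n divn_gt0.
  case: q Hq => // q Hq /= /negPf ->. by [].
move: Hpar; rewrite podd.
case: (size s) => [|[|[|n]]] //.
Qed.
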